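(* Let $c$ be a prismatic 5-circuit in a compact right-angled hyperbolic polyhedron $P$, crossing edges $e_1,\dots,e_5$ and faces $F_1,\dots,F_5$ (indices mod 5). Then there is no $i$ such that, on one and the same side of $c$, $F_{i-1}$ and $F_{i+1}$ both contain flats of $c$ and $F_i$ contains a roof of $c$.
   Context: A compact right-angled hyperbolic polyhedron is a nonempty compact convex intersection of finitely many closed half-spaces of $\mathbb{H}^3$ all of whose dihedral angles equal $\pi/2$. It has trivalent 1-skeleton and no prismatic 3- or 4-circuits, and every face has at least 5 edges. A $k$-circuit is a simple closed curve on $\partial P$ meeting the 1-skeleton transversely, in interior points of exactly $k$ distinct edges; it is prismatic if the $2k$ endpoints of these edges are pairwise distinct. For a prismatic 5-circuit $c$ crossing edges $e_1,\dots,e_5$ in cyclic order, $F_i$ denotes the face containing both $e_i$ and $e_{i+1}$. An edge $d$ of $F_i$ is a flat of $c$ if, on one side of $c$, the part of $F_i$ cut off by the arc $c\cap F_i$ is a combinatorial quadrilateral whose side opposite to that arc is $d$. A roof of $c$ in $F_i$ is a pair of edges $r_1,r_2$ of $F_i$ such that, on one side of $c$, the part of $F_i$ cut off by $c\cap F_i$ is a combinatorial pentagon bounded by that arc, two partial edges, and $r_1,r_2$. Flats and roofs lie on the side of $c$ in question. *)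

(* Defs.v *)
(* Combinatorial model of (the boundary of) a polyhedron as an
   oriented combinatorial map on a finite set of darts (half-edges). *)
From mathcomp Require Import all_boot.

Set Implicit Arguments. Unset Strict Implicit. Unset Printing Implicit Defensive.

Section Map.
Variables (D : finType) (rev nxt : D -> D).
(* rev d  : the opposite half-edge of d (same edge, reversed orientation);
   nxt d  : the next dart along the boundary of the face lying to the left of d,
            i.e. faces are the nxt-orbits (traversed counterclockwise);
   rot d := nxt (rev d) : rotation around the origin vertex of d,
            i.e. vertices are the rot-orbits. *)

Definition rot (d : D) : D := nxt (rev d).

Definition dart_adj : rel D := fun a b => (b == rev a) || (b == nxt a).

(* The combinatorial type of a compact right-angled hyperbolic polyhedron:
   the boundary of a simple (trivalent) convex 3-polytope, i.e. a connected
   planar (Euler characteristic 2) map whose faces are simple cycles and any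
   two of which share at most one edge, together with the standing facts
   (no prismatic 3-/4-circuits, every face has >= 5 edges) stated below. *)
Definition polyhedral_map : Prop :=
  [/\ (forall d, rev (rev d) = d) /\ (forall d, rev d != d), injective nxt,
      (forall d d', connect dart_adj d d'),
      (* Euler: 2 (V + F) = 2 E + 4 with 2 E = #darts *)
      (fcard rot predT + fcard nxt predT).*2 = #|D| + 4 &
      ((* every face boundary is a simple cycle (no repeated vertex) *)
      (forall d d', fconnect nxt d d' -> fconnect rot d d' -> d = d') /\
      (* two faces share at most one edge (and no edge bounds the same face twice) *)
      (forall d d', fconnect nxt d d' -> fconnect nxt (rev d) (rev d') -> d = d'))].

Definition trivalent : Prop := forall d, order rot d = 3.

Definition faces_ge5 : Prop := forall d, 5 <= order nxt d.

(* A k-circuit is encoded, up to isotopy, by the cyclic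
   sequence of crossed edges: x j is the dart of the j-th crossed edge e_j
   whose left face is the face F_j the curve enters after crossing e_j.
   The curve then runs inside F_j along an arc (chord) from e_j to
   e_{j+1}; on the boundary of F_j the edge e_{j+1} is the dart
   rev (x (j+1)). *)
Variable k : nat.
Implicit Type x : 'I_k -> D.

Definition entry x (j : 'I_k) : D := x j.
Definition exit x (j : 'I_k) : D := rev (x (ordS j)).

Definition k_circuit x : Prop :=
  [/\
      (forall j l, j != l -> x j != x l /\ x j != rev (x l)),
      (forall j, fconnect nxt (entry x j) (exit x j)) &
      (* simplicity: two arcs in the same face do not cross, i.e. their
         endpoints are not interlaced along the face boundary *)
      (forall j l, j != l -> fconnect nxt (entry x j) (entry x l) ->
         let a := entry x j in
         (findex nxt a (entry x l) < findex nxt a (exit x j))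
           = (findex nxt a (exit x l) < findex nxt a (exit x j)))].

(* endpoint b of the crossed edge e_j (as a dart whose origin is it) *)
Definition endpt x (j : 'I_k) (b : bool) : D := if b then rev (x j) else x j.

Definition prismatic x : Prop :=
  k_circuit x /\
  forall j l (b b' : bool), (j, b) != (l, b') ->
    ~~ fconnect rot (endpt x j b) (endpt x l b').

(* Orient the curve by its crossing order; side [true] is the right
   side.  In F_j the part on side [true] is bounded by the arc, the end of
   e_j, the boundary darts strictly between entry and exit (in nxt order),
   and the start of e_{j+1}; side [false] uses the complementary boundary
   arc from exit to entry. *)
Definition side_start x (s : bool) j : D := if s then entry x j else exit x j.
Definition side_end x (s : bool) j : D := if s then exit x j else entry x j.

(* F_j contains a flat of c on side s: the cut-off part is a quadrilateral
   (arc, partial edge, one full edge d = nxt start, partial edge). *)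
Definition has_flat x s j : Prop := iter 2 nxt (side_start x s j) = side_end x s j.

(* F_j contains a roof of c on side s: the cut-off part is a pentagon
   (arc, partial edge, two full edges r1 r2, partial edge). *)
Definition has_roof x s j : Prop := iter 3 nxt (side_start x s j) = side_end x s j.

End Map.

Definition no_prismatic (D : finType) (rev nxt : D -> D) (k : nat) : Prop :=
  forall x : 'I_k -> D, ~ prismatic rev nxt x.

Definition compact_RA_type (D : finType) (rev nxt : D -> D) : Prop :=
  [/\ polyhedral_map rev nxt, trivalent rev nxt, no_prismatic rev nxt 3,
      no_prismatic rev nxt 4 & faces_ge5 nxt].

(* Main.v *)
Require Import Defs.
From mathcomp Require Import all_boot.
Set Implicit Arguments. Unset Strict Implicit. Unset Printing Implicit Defensive.

Section Core.
Variables (D : finType) (rev nxt : D -> D).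
Hypotheses (revK : forall d, rev (rev d) = d) (revN : forall d, rev d != d)
  (nxtI : injective nxt) (tri : trivalent rev nxt) (ge5 : faces_ge5 nxt)
  (L2 : forall d d', fconnect nxt d d' -> fconnect nxt (rev d) (rev d') -> d = d')
  (np3 : no_prismatic rev nxt 3) (np4 : no_prismatic rev nxt 4).

Local Notation SF := (fconnect nxt).
Local Notation SV := (fconnect (Defs.rot rev nxt)).

Lemma rotI : injective (Defs.rot rev nxt).
Proof. by move=> a b /nxtI; apply: (can_inj revK). Qed.

Lemma SFsym a b : SF a b = SF b a.
Proof. exact: fconnect_sym. Qed.
Lemma SVsym a b : SV a b = SV b a.
Proof. exact: (fconnect_sym rotI). Qed.
Lemma SFn a b : nxt a = b -> SF a b.
Proof. by move<-; apply: fconnect1. Qed.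
Lemma SVn a b : nxt (rev a) = b -> SV a b.
Proof. by move<-; apply: fconnect1. Qed.

Lemma rot3 a : Defs.rot rev nxt (Defs.rot rev nxt (Defs.rot rev nxt a)) = a.
Proof. by have := iter_order rotI a; rewrite tri. Qed.

Lemma T3 a b c : nxt (rev a) = b -> nxt (rev b) = c -> nxt (rev c) = a.
Proof. by move=> h1 h2; have := rot3 a; rewrite /Defs.rot h1 h2. Qed.

Lemma SVcase a b : SV a b -> [\/ b = a, b = nxt (rev a) | nxt (rev b) = a].
Proof.
rewrite fconnect_orbit /orbit tri /= !inE => /or3P[] /eqP ->.
- by constructor 1.
- by constructor 2.
- by constructor 3; have := rot3 a.
Qed.

Lemma ordc a k : 0 < k < 5 -> iter k nxt a = a -> False.
Proof.
move=> /andP[k0 k5] E.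
have := findex_iter (x := a) (leq_trans k5 (ge5 a)).
by rewrite E findex0 => k0'; move: k0; rewrite -k0'.
Qed.

Lemma noSFrev a : SF a (rev a) -> False.
Proof.
move=> H; have := L2 H; rewrite revK SFsym => /(_ H) E.
by move: (revN a); rewrite -E eqxx.
Qed.

Lemma fc X Y a b : SF X a -> SF Y b -> a = b -> ~~ SF X Y -> False.
Proof.
move=> h1 h2 E /negP; apply; apply: connect_trans h1 _.
by rewrite E SFsym.
Qed.

Lemma SVtr a a' b : SV a a' -> ~~ SV a b -> ~~ SV a' b.
Proof.
move=> h /negP n; apply/negP => h'; apply: n; exact: connect_trans h h'.
Qed.

Ltac splitall := repeat match goal with H : is_true (_ && _) |- _ => case/andP: H => ? ? end.

Lemma pris4 y0 y1 y2 y3 :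
 SF y0 (rev y1) -> SF y1 (rev y2) -> SF y2 (rev y3) -> SF y3 (rev y0) ->
 pairwise (fun a b => ~~ SF a b) [:: y0; y1; y2; y3] ->
 pairwise (fun a b => ~~ SV a b) [:: y0; rev y0; y1; rev y1; y2; rev y2; y3; rev y3] ->
 prismatic rev nxt (fun j : 'I_4 => nth y0 [:: y0; y1; y2; y3] j).
Proof.
move=> l0 l1 l2 l3 F V.
have Hend : forall j l b b', (j,b) != (l,b') ->
   ~~ SV (endpt rev (fun j : 'I_4 => nth y0 [:: y0; y1; y2; y3] j) j b)
         (endpt rev (fun j : 'I_4 => nth y0 [:: y0; y1; y2; y3] j) l b').
  move: V; rewrite /= !andbT => V.
  splitall.
  move=> [[|[|[|[|j]]]] Hj] [[|[|[|[|l]]]] Hl] [] [] //= neq;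
   try (by rewrite SVsym); by [].
split=> //; split.
- move=> j l jl; split; apply/negP => /eqP E.
  + have c : (j,false) != (l,false) by apply: contra jl => /eqP [->].
    by have /negP := Hend j l false false c; rewrite /endpt E connect0; apply.
  + have c : (j,false) != (l,true) by rewrite xpair_eqE andbF.
    by have /negP := Hend j l false true c; rewrite /endpt E connect0; apply.
- move=> [[|[|[|[|j]]]] Hj] //=.
- move: F; rewrite /= !andbT => F; splitall.
  move=> [[|[|[|[|j]]]] Hj] [[|[|[|[|l]]]] Hl] //= _ H; exfalso;
   move: H; rewrite /entry /=; by [apply/negP | rewrite SFsym; apply/negP].
Qed.


Lemma pris3 y0 y1 y2 :
 SF y0 (rev y1) -> SF y1 (rev y2) -> SF y2 (rev y0) ->
 pairwise (fun a b => ~~ SF a b) [:: y0; y1; y2] ->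
 pairwise (fun a b => ~~ SV a b) [:: y0; rev y0; y1; rev y1; y2; rev y2] ->
 prismatic rev nxt (fun j : 'I_3 => nth y0 [:: y0; y1; y2] j).
Proof.
move=> l0 l1 l2 F V.
have Hend : forall j l b b', (j,b) != (l,b') ->
   ~~ SV (endpt rev (fun j : 'I_3 => nth y0 [:: y0; y1; y2] j) j b)
         (endpt rev (fun j : 'I_3 => nth y0 [:: y0; y1; y2] j) l b').
  move: V; rewrite /= !andbT => V.
  splitall.
  move=> [[|[|[|j]]] Hj] [[|[|[|l]]] Hl] [] [] //= neq;
   try (by rewrite SVsym); by [].
split=> //; split.
- move=> j l jl; split; apply/negP => /eqP E.
  + have c : (j,false) != (l,false) by apply: contra jl => /eqP [->].
    by have /negP := Hend j l false false c; rewrite /endpt E connect0; apply.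
  + have c : (j,false) != (l,true) by rewrite xpair_eqE andbF.
    by have /negP := Hend j l false true c; rewrite /endpt E connect0; apply.
- move=> [[|[|[|j]]] Hj] //=.
- move: F; rewrite /= !andbT => F; splitall.
  move=> [[|[|[|j]]] Hj] [[|[|[|l]]] Hl] //= _ H; exfalso;
   move: H; rewrite /entry /=; by [apply/negP | rewrite SFsym; apply/negP].
Qed.

Lemma nsf X Y a : SF X (rev a) -> SF Y a -> ~~ SF X Y.
Proof.
move=> h1 h2; apply/negP => XY; apply: (@noSFrev a).
have aY : SF a Y by rewrite SFsym.
have YX : SF Y X by rewrite SFsym.
exact: connect_trans aY (connect_trans YX h1).
Qed.

Lemma nsf2 X Y a b : SF X a -> SF Y b -> ~~ SF X Y -> ~~ SF a b.
Proof.
move=> h1 h2 /negP n; apply/negP => ab; apply: n.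
have bY : SF b Y by rewrite SFsym.
exact: connect_trans h1 (connect_trans ab bY).
Qed.

Lemma SFt a b c : SF a b -> SF b c -> SF a c.
Proof. exact: connect_trans. Qed.
Lemma SFj X a b : SF X a -> SF X b -> SF a b.
Proof. by move=> h1 h2; apply: connect_trans h2; rewrite SFsym. Qed.
Lemma SFb a b : nxt b = a -> SF a b.
Proof. by move=> h; rewrite SFsym SFn. Qed.

Ltac fcon0 E := match type of E with ?a = ?b =>
  match goal with
  | H1 : is_true (fconnect _ ?X a), H2 : is_true (fconnect _ ?Y b),
    N : is_true (~~ fconnect _ ?X ?Y) |- _ => exact: (fc H1 H2 E N)
  | H1 : is_true (fconnect _ ?X a), H2 : is_true (fconnect _ ?Y b),
    N : is_true (~~ fconnect _ ?Y ?X) |- _ => exact: (fc H2 H1 (esym E) N)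
  end end.
Ltac fcon E := first [ fcon0 E | (let E2 := fresh "E" in have E2 := f_equal rev E; rewrite ?revK in E2; fcon0 E2) ].
Ltac ordt a := first [ apply: (@ordc a 1) => //; simpl; congruence
                     | apply: (@ordc a 2) => //; simpl; congruence
                     | apply: (@ordc a 3) => //; simpl; congruence
                     | apply: (@ordc a 4) => //; simpl; congruence ].
Ltac rvn0 E := match type of E with
  | rev ?a = ?a => by move: (revN a); rewrite E eqxx
  | ?a = rev ?a => by move: (revN a); rewrite -E eqxx end.

Ltac auto1 E := first [ fcon E | rvn0 E
  | match goal with N : is_true (_ != _) |- _ => first [by rewrite E eqxx in N | by rewrite -E eqxx in N] end
  | match type of E with ?a = ?b => first [ordt a | ordt b] end ].
Ltac pairt := let E1 := fresh "E" in apply/negP => /SVcase[] E1; rewrite ?revK in E1;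
  repeat match goal with V : nxt (rev _) = _ |- _ => rewrite V in E1 end; auto1 E1.

Lemma core A B C E F :
 SF A (rev B) -> SF B (rev C) -> SF C (rev E) -> SF E (rev F) -> SF F (rev A) ->
 A != rev B ->
 ~~ SV (rev A) (rev E) -> ~~ SV (rev A) F -> ~~ SV (rev A) (rev F) ->
 ~~ SV (rev E) F -> ~~ SV (rev E) (rev F) -> ~~ SV F (rev F) ->
 nxt (nxt A) = rev B -> nxt (nxt (nxt B)) = rev C -> nxt (nxt C) = rev E -> False.
Proof.
move=> lAB lBC lCE lEF lFA nAB cAE cAF cAF' cEF cEF' cFF.
move Ed: (nxt A) => d fA.
move Er1: (nxt B) => r1; move Er2: (nxt r1) => r2 rB.
move Ed': (nxt C) => d' fC.
have [g Eg] : {g | nxt (rev d) = g} by eexists.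
have [f Ef] : {f | nxt (rev r2) = f} by eexists.
have [h Eh] : {h | nxt E = h} by eexists.
have V1 : nxt (rev r1) = rev d.
  by apply: (@T3 _ (rev B)); rewrite revK.
have V2 : nxt (rev f) = rev r1 by apply: (@T3 _ r2); rewrite ?revK.
have V3 : nxt (rev d') = rev r2 by apply: (@T3 _ (rev C)); rewrite ?revK.
have V4 : nxt (rev g) = rev A by apply: (@T3 _ d); rewrite ?revK.
have V5 : nxt (rev h) = rev d' by apply: (@T3 _ (rev E)); rewrite ?revK.
have mA_A : SF A A := connect0 _ _.
have mA_d : SF A d := SFn Ed.
have mB_B : SF B B := connect0 _ _.
have mB_r1 : SF B r1 := SFn Er1.
have mB_r2 : SF B r2 := SFt mB_r1 (SFn Er2).
have mC_C : SF C C := connect0 _ _.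
have mC_d' : SF C d' := SFn Ed'.
have mE_E : SF E E := connect0 _ _.
have mE_h : SF E h := SFn Eh.
have mE_nh : SF E (nxt h) := SFt mE_h (fconnect1 _ _).
have mE_nrF : SF E (nxt (rev F)) := SFt lEF (fconnect1 _ _).
have mF_F : SF F F := connect0 _ _.
have mF_rg : SF F (rev g) := SFt lFA (SFb V4).
have mF_nF : SF F (nxt F) := fconnect1 _ _.
have mG_g : SF g g := connect0 _ _.
have mG_rd : SF g (rev d) := SFb Eg.
have mG_rr1 : SF g (rev r1) := SFt mG_rd (SFb V1).
have mG_rf : SF g (rev f) := SFt mG_rr1 (SFb V2).
have mG_ng : SF g (nxt g) := fconnect1 _ _.
have mH_f : SF f f := connect0 _ _.
have mH_rr2 : SF f (rev r2) := SFb Ef.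
have mH_rd' : SF f (rev d') := SFt mH_rr2 (SFb V3).
have mH_rh : SF f (rev h) := SFt mH_rd' (SFb V5).
have mH_nf : SF f (nxt f) := fconnect1 _ _.
have GH : ~~ SF g f := nsf mG_rf mH_f.
have GF3 : ~~ SF g F by apply: (nsf (a := rev g)); rewrite ?revK.
have GFm1 : ~~ SF g A := nsf mG_rd mA_d.
have GF0 : ~~ SF g B := nsf mG_rr1 mB_r1.
have HF2 : ~~ SF f E := nsf mH_rh mE_h.
have HF0 : ~~ SF f B := nsf mH_rr2 mB_r2.
have HF1 : ~~ SF f C := nsf mH_rd' mC_d'.
have F2F3 : ~~ SF E F := nsf lEF mF_F.
have F1F2 : ~~ SF C E := nsf lCE mE_E.
have F3Fm1 : ~~ SF F A := nsf lFA mA_A.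
have GF1 : ~~ SF g C.
  apply/negP => gC; have : rev r1 = C.
    apply: L2; first by apply: SFt gC; rewrite SFsym.
    by rewrite revK; apply: SFt lBC; rewrite SFsym.
  by move=> E1; ordt r1.
have GF2 : ~~ SF g E.
  apply/negP => gE; have E1 : g = rev F.
    apply: L2; first exact: SFt gE lEF.
    by rewrite revK SFsym.
  move/negP: cAF'; apply; rewrite SVsym; apply: SVn.
  by rewrite -V4 E1 !revK.
have HF3 : ~~ SF f F.
  apply/negP => fF; have E1 : rev h = F.
    apply: L2; first by apply: SFt fF; rewrite SFsym.
    by rewrite revK; apply: SFt lEF; rewrite SFsym.
  move/negP: cEF'; apply; apply: SVn.
  by rewrite revK Eh -E1 revK.
have F3F0 : ~~ SF F B.
  apply/negP => FB; move/negP: nAB; apply; apply/eqP; apply: L2 => //.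
  by rewrite revK; apply: SFt FB; rewrite SFsym.
have sAg : SV (rev A) g by apply: connect_trans (SVn (b := d) _) (SVn Eg); rewrite revK.
have sEh : SV (rev E) h by apply: SVn; rewrite revK.

have PQ : ~~ SV g (rev g) by pairt.
have PU : ~~ SV g f by pairt.
have PU' : ~~ SV g (rev f) by pairt.
have PT : ~~ SV g h by pairt.
have PT' : ~~ SV g (rev h) by pairt.
have PX0 : ~~ SV g F := SVtr sAg cAF.
have PX1 : ~~ SV g (rev F) := SVtr sAg cAF'.
have QU : ~~ SV (rev g) f by pairt.
have QU' : ~~ SV (rev g) (rev f) by pairt.
have QT : ~~ SV (rev g) h by pairt.
have QT' : ~~ SV (rev g) (rev h) by pairt.
have QX0 : ~~ SV (rev g) F by pairt.
have UU' : ~~ SV f (rev f) by pairt.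
have UT : ~~ SV f h by pairt.
have UT' : ~~ SV f (rev h) by pairt.
have UX0 : ~~ SV f F by pairt.
have UX1 : ~~ SV f (rev F) by pairt.
have U'T : ~~ SV (rev f) h by pairt.
have U'T' : ~~ SV (rev f) (rev h) by pairt.
have U'X0 : ~~ SV (rev f) F by pairt.
have U'X1 : ~~ SV (rev f) (rev F) by pairt.
have TT' : ~~ SV h (rev h) by pairt.
have TX0 : ~~ SV h F := SVtr sEh cEF.
have TX1 : ~~ SV h (rev F) := SVtr sEh cEF'.
have T'X0 : ~~ SV (rev h) F by pairt.

have [D1|nD1] := eqVneq (nxt F) (rev g).
  have [k Ek] : {k | nxt g = k} by eexists.
  have V6 : nxt (rev k) = rev F by apply: (@T3 _ (rev g)); rewrite ?revK.
  have mE_rk : SF E (rev k) := SFt lEF (SFb V6).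
  have mG_k : SF g k := SFn Ek.
  have mG_nk : SF g (nxt k) := SFt mG_k (fconnect1 _ _).
  have sgk : SV (rev g) k by apply: SVn; rewrite revK.
  have ZU' : nxt k != rev f.
    apply/eqP => E1.
    have V7 : nxt (rev (nxt f)) = rev k by apply: (@T3 _ (rev f)); rewrite ?revK.
    have E2 : nxt f = rev h.
      apply: L2; first exact: SFj mH_nf mH_rh.
      by rewrite revK; exact: SFj (SFt mE_rk (SFb V7)) mE_h.
    ordt (rev h).
  have ZT' : nxt h != rev k.
    apply/eqP => E1.
    have V8 : nxt (rev (nxt k)) = rev h by apply: (@T3 _ (rev k)); rewrite ?revK.
    have E2 : nxt k = rev f.
      apply: L2; first exact: SFj mG_nk mG_rf.
      by rewrite revK; exact: SFj (SFt mH_rh (SFb V8)) mH_f.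
    by rewrite E2 eqxx in ZU'.
  have Kf : ~~ SV k f := SVtr sgk QU.
  have Kf' : ~~ SV k (rev f) := SVtr sgk QU'.
  have Kh : ~~ SV k h := SVtr sgk QT.
  have Kh' : ~~ SV k (rev h) := SVtr sgk QT'.
  have Zf : ~~ SV f (rev k) by pairt.
  have Zf' : ~~ SV (rev f) (rev k) by pairt.
  have Zh : ~~ SV h (rev k) by pairt.
  have Zh' : ~~ SV (rev h) (rev k) by pairt.
  have ZK : ~~ SV k (rev k) by pairt.
  have l0 : SF f (rev h) := mH_rh.
  have l1 : SF h (rev k) := SFj mE_h mE_rk.
  have l2 : SF k (rev f) := SFj mG_k mG_rf.
  have Fd : pairwise (fun a b => ~~ SF a b) [:: f; h; k].
    have a1 : ~~ SF f h := nsf2 mH_f mE_h HF2.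
    have a2 : ~~ SF f k by apply: nsf2 mH_f mG_k _; rewrite SFsym.
    have a3 : ~~ SF h k by apply: nsf2 mE_h mG_k _; rewrite SFsym.
    by rewrite /= a1 a2 a3.
  have Vd : pairwise (fun a b => ~~ SV a b) [:: f; rev f; h; rev h; k; rev k].
    by rewrite /= !andbT; repeat (apply/andP; split); first [done | by rewrite SVsym].
  exact: (np3 (pris3 l0 l1 l2 Fd Vd)).
have QX1 : ~~ SV (rev g) (rev F) by pairt.
have [D2|nD2] := eqVneq (nxt h) (rev F).
  have [m Em] : {m | nxt F = m} by eexists.
  have V7 : nxt (rev m) = rev h by apply: (@T3 _ (rev F)); rewrite ?revK.
  have mF_m : SF F m := SFn Em.
  have mF_nm : SF F (nxt m) := SFt mF_m (fconnect1 _ _).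
  have mH_rm : SF f (rev m) := SFt mH_rh (SFb V7).
  have sFm : SV (rev F) m by apply: SVn; rewrite revK.
  have H1 : nxt f != rev m.
    apply/eqP => E1.
    have V9 : nxt (rev (nxt m)) = rev f by apply: (@T3 _ (rev m)); rewrite ?revK.
    have E2 : nxt m = rev g.
      apply: L2; first exact: SFj mF_nm mF_rg.
      by rewrite revK; exact: SFj (SFt mG_rf (SFb V9)) mG_g.
    have : SV (rev f) (rev g).
      apply: connect_trans (SVn (b := rev m) _) (SVn (b := rev g) _); by rewrite revK.
    by rewrite SVsym (negbTE QU').
  have H2 : nxt m != rev g.
    apply/eqP => E1.
    have V10 : nxt (rev (nxt g)) = rev m by apply: (@T3 _ (rev g)); rewrite ?revK.
    have E2 : nxt g = rev f.
      apply: L2; first exact: SFj mG_ng mG_rf.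
      by rewrite revK; exact: SFj (SFt mH_rm (SFb V10)) mH_f.
    ordt (rev f).
  have Mf : ~~ SV m f by apply: SVtr sFm _; rewrite SVsym.
  have Mf' : ~~ SV m (rev f) by apply: SVtr sFm _; rewrite SVsym.
  have Mg : ~~ SV m g by apply: SVtr sFm _; rewrite SVsym.
  have Mg' : ~~ SV m (rev g) by apply: SVtr sFm _; rewrite SVsym.
  have Nf : ~~ SV f (rev m) by pairt.
  have Nf' : ~~ SV (rev f) (rev m) by pairt.
  have Nm : ~~ SV m (rev m) by pairt.
  have Ng : ~~ SV (rev m) g by pairt.
  have Ng' : ~~ SV (rev m) (rev g) by pairt.
  have l0 : SF f (rev m) := mH_rm.
  have l1 : SF m (rev g) := SFj mF_m mF_rg.
  have l2 : SF g (rev f) := mG_rf.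
  have Fd : pairwise (fun a b => ~~ SF a b) [:: f; m; g].
    have a1 : ~~ SF f m := nsf2 mH_f mF_m HF3.
    have a2 : ~~ SF f g by rewrite SFsym.
    have a3 : ~~ SF m g by apply: nsf2 mF_m mG_g _; rewrite SFsym.
    by rewrite /= a1 a2 a3.
  have Vd : pairwise (fun a b => ~~ SV a b) [:: f; rev f; m; rev m; g; rev g].
    by rewrite /= !andbT; repeat (apply/andP; split); first [done | by rewrite SVsym].
  exact: (np3 (pris3 l0 l1 l2 Fd Vd)).
have T'X1 : ~~ SV (rev h) (rev F) by pairt.
have l0 : SF g (rev f) := mG_rf.
have l1 : SF f (rev h) := mH_rh.
have l2 : SF h (rev F) := SFj mE_h lEF.
have l3 : SF F (rev g) := mF_rg.
have Fd : pairwise (fun a b => ~~ SF a b) [:: g; f; h; F].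
  have a1 : ~~ SF g h := nsf2 mG_g mE_h GF2.
  have a2 : ~~ SF f h := nsf2 mH_f mE_h HF2.
  have a3 : ~~ SF h F := nsf2 mE_h mF_F F2F3.
  by rewrite /= GH GF3 HF3 a1 a2 a3.
have Vd : pairwise (fun a b => ~~ SV a b) [:: g; rev g; f; rev f; h; rev h; F; rev F].
  by rewrite /= !andbT; repeat (apply/andP; split); first [done | by rewrite SVsym].
exact: (np4 (pris4 l0 l1 l2 l3 Fd Vd)).
Qed.

End Core.

Lemma ordS5 (i : 'I_5) : ordS (ordS (ordS (ordS (ordS i)))) = i.
Proof. apply/val_inj; case: i => [[|[|[|[|[|]]]]] //]. Qed.
Lemma ordS_uniq (i : 'I_5) : uniq [:: i; ordS i; ordS (ordS i); ordS (ordS (ordS i)); ordS (ordS (ordS (ordS i)))].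
Proof. by case: i => [[|[|[|[|[|]]]]] //]. Qed.
Lemma pneq (T1 T2 : eqType) (a b : T1) (u v : T2) : a != b -> (a,u) != (b,v).
Proof. by move=> h; rewrite xpair_eqE (negbTE h). Qed.
Lemma pneq' (T1 : eqType) (a : T1) : (a,false) != (a,true).
Proof. by rewrite xpair_eqE andbF. Qed.

Ltac splitall2 := repeat match goal with H : is_true (_ && _) |- _ => case/andP: H => ? ? end.
Ltac neqt := first [ done | by rewrite eq_sym | apply: pneq; first [done | by rewrite eq_sym] | exact: pneq' ].

Theorem mainTheorem16 (D : finType) (rev nxt : D -> D)
  (HP : compact_RA_type rev nxt) (x : 'I_5 -> D)
  (hc : prismatic rev nxt x) :
  forall (i : 'I_5) (s : bool),
    ~ [/\ has_flat rev nxt x s (ord_pred i),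
          has_roof rev nxt x s i &
          has_flat rev nxt x s (ordS i)].
Proof.
move: HP => [[[revK revN] nxtI _ _ [_ L2]] tri np3 np4 ge5].
case: hc => [[Hdist Hlink _] Hend].
move=> i s [Ha Hb Hc].
set j := ord_pred i in Ha.
have Ei : i = ordS j by rewrite /j ord_predK.
rewrite Ei in Hb Hc; clearbody j.
have U := ordS_uniq j; rewrite /= !inE !negb_or in U; splitall2.
have L5 := Hlink (ordS (ordS (ordS (ordS j)))); rewrite /exit ordS5 in L5.
have HS := fconnect_sym nxtI.
case: s Ha Hb Hc; rewrite /has_flat /has_roof /side_start /side_end /entry /exit /= => Ha Hb Hc.
{ eapply (core revK revN nxtI tri ge5 L2 np3 np4 (A := x j) (B := x (ordS j))
     (C := x (ordS (ordS j))) (E := x (ordS (ordS (ordS j)))) (F := x (ordS (ordS (ordS (ordS j)))))).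
  all: try exact: Hlink.
  all: try exact: L5.
  all: try done.
  1: by apply: (Hdist _ _ _).2; neqt.
  all: first [ apply: (Hend _ _ true true) | apply: (Hend _ _ true false) | apply: (Hend _ _ false true) ].
  all: neqt. }
{ eapply (core revK revN nxtI tri ge5 L2 np3 np4 (A := rev (x (ordS (ordS (ordS j)))))
     (B := rev (x (ordS (ordS j)))) (C := rev (x (ordS j))) (E := rev (x j))
     (F := rev (x (ordS (ordS (ordS (ordS j))))))); rewrite ?revK.
  all: try (rewrite HS; exact: Hlink).
  all: try (rewrite HS; exact: L5).
  all: try done.
  1: by rewrite eq_sym; apply: (Hdist _ _ _).2; neqt.
  all: first [ apply: (Hend _ _ false false) | apply: (Hend _ _ false true) | apply: (Hend _ _ true false) ].
  all: neqt. }
Qed.
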